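(* Let $G$ be a graph with $n$ vertices, $m\geq 1$ edges and maximum degree $\Delta$, let $\mathcal{L}(G)$ be its line graph, and let $0\leq\alpha\leq 1$. Then $$S_{k}(A_{\alpha}(\mathcal{L}(G)))\leq 2k(\alpha \Delta-1)+(1-\alpha)S_{k}(Q(G))$$ for $1\leq k \leq s$, where $s=\min\{n,m\}$. If $m>n$, then $$S_{k}(A_{\alpha}(\mathcal{L}(G)))\leq 2\alpha k(\Delta-1)+2(1-\alpha)(m-k)$$ for $n+1\leq k \leq m$.
   Context: All graphs are simple and undirected. $A(G)$ is the adjacency matrix, $D(G)$ the diagonal degree matrix, $Q(G)=D(G)+A(G)$ the signless Laplacian, and $A_{\alpha}(G)=\alpha D(G)+(1-\alpha)A(G)$. For a real symmetric matrix $M$ with eigenvalues $\lambda_1(M)\geq\cdots\geq\lambda_n(M)$, $S_k(M)=\sum_{i=1}^k\lambda_i(M)$. The line graph $\mathcal{L}(G)$ has vertex set $E(G)$, two vertices being adjacent iff the corresponding edges of $G$ share an endpoint. *)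

(* Defs.v *)
From HB Require Import structures.
From mathcomp Require Import all_boot all_order all_algebra.
From mathcomp Require Import polyrcf.
From mathcomp Require Import reals.
Set Implicit Arguments. Unset Strict Implicit. Unset Printing Implicit Defensive.
Import Order.TTheory GRing.Theory Num.Theory.
Local Open Scope ring_scope.

Definition simple_graph (V : finType) (e : rel V) : Prop :=
  symmetric e /\ irreflexive e.

Definition deg (V : finType) (e : rel V) (v : V) : nat := #|[set u | e v u]|.

Definition maxdeg (V : finType) (e : rel V) : nat := \max_(v : V) deg e v.

Definition is_edge (V : finType) (e : rel V) (E : {set V}) : bool :=
  [exists u : V, exists v : V, e u v && (E == [set u; v])].

Definition edge_type (V : finType) (e : rel V) : finType :=
  {E : {set V} | is_edge e E}.

Definition line_rel (V : finType) (e : rel V) : rel (edge_type e) :=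
  fun E F => (E != F) && (val E :&: val F != set0).
Arguments line_rel {V} e.

Definition adjmx (R : realType) (V : finType) (e : rel V) : 'M[R]_#|V| :=
  \matrix_(i, j) (e (enum_val i) (enum_val j))%:R.

Definition degmx (R : realType) (V : finType) (e : rel V) : 'M[R]_#|V| :=
  \matrix_(i, j) ((i == j)%:R * (deg e (enum_val i))%:R).

Definition Qmx (R : realType) (V : finType) (e : rel V) : 'M[R]_#|V| :=
  degmx R e + adjmx R e.

Definition Aalpha (R : realType) (alpha : R) (V : finType) (e : rel V)
  : 'M[R]_#|V| := alpha *: degmx R e + (1 - alpha) *: adjmx R e.

(* eigenvalues of a (real symmetric) matrix: the real roots of its
   characteristic polynomial, repeated according to multiplicity, sorted in
   non-increasing order: lambda_1 >= lambda_2 >= ... *)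
Definition eigvals (R : realType) (N : nat) (M : 'M[R]_N) : seq R :=
  let p := char_poly M in
  sort (fun x y : R => y <= x)
    (flatten [seq nseq (mup x p) x | x <- rootsR p]).

Definition Sk (R : realType) (N : nat) (M : 'M[R]_N) (k : nat) : R :=
  \sum_(i < k) nth 0 (eigvals M) i.

(* Main.v *)
Require Import Defs.
From HB Require Import structures.
From mathcomp Require Import all_boot all_order all_algebra.
From mathcomp Require Import polyrcf.
From mathcomp Require Import reals.
From mathcomp Require Import complex spectral sesquilinear.
From mathcomp Require Import ring lra.
From mathcomp Require Import fingroup perm.
Import Order.TTheory GRing.Theory Num.Theory.
Local Open Scope ring_scope.
Set Implicit Arguments. Unset Strict Implicit. Unset Printing Implicit Defensive.
Local Open Scope sesquilinear_scope.
Section Major.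
Variable R : realType.

Lemma major (N k : nat) (r w : 'I_N -> R) :
  (0 < k <= N)%N -> (forall i, 0 <= r i) -> (forall i, 0 <= w i <= 1) ->
  \sum_i w i <= k%:R ->
  \sum_i r i * w i <=
    \sum_(j < k) nth 0 (sort (fun x y : R => y <= x) [seq r i | i <- enum 'I_N]) j.
Proof.
move=> /andP[k0 kN] r0 w01 sw.
set rs := [seq r i | i <- enum 'I_N].
set s := sort _ rs.
have ss : size s = N by rewrite size_sort size_map size_enum_ord.
have tot : total (fun x y : R => y <= x) by move=> x y; exact: le_total.
have trn : transitive (fun x y : R => y <= x) by move=> x y z /= h1 h2; exact: le_trans h2 h1.
have srt : sorted (fun x y : R => y <= x) s by apply: sort_sorted.
have pe : perm_eq s rs by rewrite perm_sort.
set t := nth 0 s k.-1.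
have km1 : (k.-1 < N)%N by apply: leq_trans kN; rewrite ltn_predL.
have t0 : 0 <= t.
  have : t \in rs by rewrite -(perm_mem pe) mem_nth // ss.
  by case/mapP => i _ ->.
have Hge : forall j, (j < k)%N -> t <= nth 0 s j.
  move=> j jk; apply: (sorted_leq_nth trn (fun x => lexx x) 0 srt).
  - by rewrite inE ss; apply: leq_trans jk kN.
  - by rewrite inE ss.
  - by rewrite -ltnS prednK.
have Hle : forall j, (k <= j < N)%N -> nth 0 s j <= t.
  move=> j /andP[kj jN]; apply: (sorted_leq_nth trn (fun x => lexx x) 0 srt).
  - by rewrite inE ss.
  - by rewrite inE ss.
  - exact: leq_trans (leq_pred k) kj.
have E1 : \sum_i r i * w i = \sum_i (r i - t) * w i + t * \sum_i w i.
  by rewrite mulr_sumr -big_split; apply: eq_bigr => i _ /=; ring.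
have E2 : \sum_i (r i - t) * w i <= \sum_i Num.max (r i - t) 0.
  apply: ler_sum => i _; have /andP[w0 w1] := w01 i.
  case: (leP t (r i)) => h.
    rewrite max_l ?subr_ge0 //; nra.
  rewrite max_r; last by rewrite subr_le0 ltW.
  nra.
have E3 : \sum_i Num.max (r i - t) 0 = \sum_(j < N) Num.max (nth 0 s j - t) 0.
  have -> : \sum_(j < N) Num.max (nth 0 s j - t) 0 = \sum_(x <- s) Num.max (x - t) 0.
    by rewrite (big_nth 0) ss big_mkord.
  by rewrite (perm_big _ pe) big_map big_enum.
have E4 : \sum_(j < N) Num.max (nth 0 s j - t) 0 = \sum_(j < k) (nth 0 s j - t).
  rewrite (bigID (fun j : 'I_N => (j < k)%N)) /= [X in _ + X]big1 ?addr0.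
    rewrite (big_ord_widen N (fun j => nth 0 s j - t) kN).
    by apply: eq_bigr => i ik; rewrite max_l // subr_ge0 Hge.
  by move=> i; rewrite -leqNgt => ki; rewrite max_r // subr_le0 Hle // ki ltn_ord.
have E5 : \sum_(j < k) (nth 0 s j - t) = \sum_(j < k) nth 0 s j - t * k%:R.
  by rewrite sumrB sumr_const card_ord mulr_natr.
rewrite E1; apply: le_trans (lerD E2 (ler_wpM2l t0 sw)) _.
by rewrite E3 E4 E5 subrK.
Qed.
End Major.
Lemma char_poly_sim (F : comNzRingType) n (U P D : 'M[F]_n) :
  U *m P = 1%:M -> char_poly (U *m D *m P) = char_poly D.
Proof.
move=> UP; rewrite /char_poly.
have -> : char_poly_mx (U *m D *m P) =
    map_mx polyC U *m char_poly_mx D *m map_mx polyC P.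
  rewrite /char_poly_mx !map_mxM mulmxBr mulmxBl; congr (_ - _).
  by rewrite mul_mx_scalar -scalemxAl -map_mxM UP map_mx1 scalemx1.
by rewrite !det_mulmx mulrAC -det_mulmx -map_mxM UP map_mx1 det1 mul1r.
Qed.

Section Spec.
Variable R : realType.
Local Notation C := R[i].

Lemma conj_real (x : R) : Num.conj (x%:C)%C = (x%:C)%C.
Proof. exact: conjc_real. Qed.

Lemma spectral_real N (M : 'M[R]_N) : M^T = M ->
  exists P : 'M[C]_N, exists r : 'I_N -> R,
   [/\ P *m P^t* = 1%:M, P^t* *m P = 1%:M,
       map_mx (real_complex R) M = P^t* *m diag_mx (\row_i (r i)%:C)%C *m P &
       eigvals M = sort (fun x y : R => y <= x) [seq r i | i <- enum 'I_N]].
Proof.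
move=> MT; set A := map_mx (real_complex R) M.
have Aher : A^t* = A.
  apply/matrixP => i j; rewrite !mxE /= conj_real.
  by rewrite -{1}MT mxE.
have Aherm : A \is hermsymmx.
  by apply/is_hermitianmxP; rewrite expr0 scale1r Aher.
have Pu := spectral_unitarymx A.
have AE : A = invmx (spectralmx A) *m diag_mx (spectral_diag A) *m spectralmx A.
  exact/orthomx_spectralP/hermitian_normalmx.
rewrite invmx_unitary // in AE.
have dreal := hermitian_spectral_diag_real Aherm.
set P := spectralmx A in Pu AE *.
set d := spectral_diag A in dreal AE *.
pose r i := complex.Re (d 0 i).
have dE : d = \row_i (r i)%:C%C.
  apply/rowP => i; rewrite mxE RRe_real //.
  by move/mxOverP : dreal => /(_ 0 i).
have PP : P *m P^t* = 1%:M by apply/unitarymxP.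
have PP' : P^t* *m P = 1%:M by apply: mulmx1C.
exists P, r; split => //; first by rewrite -dE.
have cp : char_poly M = \prod_(y <- [seq r i | i <- enum 'I_N]) ('X - y%:P).
  apply: (map_poly_inj (real_complex R)).
  rewrite map_char_poly -/A AE char_poly_sim // char_poly_trig ?diag_mx_is_trig //.
  rewrite rmorph_prod big_map big_enum /=; apply: eq_bigr => i _.
  by rewrite map_polyXsubC mxE eqxx mulr1n dE mxE.
rewrite /eigvals cp; apply/perm_sortP.
- by move=> x y; exact: le_total.
- by move=> x y z /= h1 h2; exact: le_trans h2 h1.
- by move=> x y /andP[h1 h2]; apply: le_anti; rewrite h1 h2.
set rs := [seq r i | i <- enum 'I_N].
set p := \prod_(y <- rs) ('X - y%:P).
have pnz : p != 0 by apply: monic_neq0; apply: monic_prod_XsubC.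
have ro := roots_on_rootsR pnz.
have memR y : (y \in rootsR p) = (y \in rs).
  by rewrite -ro /= root_prod_XsubC.
have urR : uniq (rootsR p) by apply: uniq_roots.
apply/allP => y _ /=.
rewrite count_flatten -map_comp sumnE big_map.
under eq_bigr do rewrite /= count_nseq /= mu_prod_XsubC.
case: (boolP (y \in rootsR p)) => yR.
  rewrite (bigD1_seq y) //= eqxx mul1n big1 ?addn0 // => x xy.
  by rewrite (negbTE xy).
rewrite big1_seq; last first.
  move=> x /andP[_ xR]; case: eqP => // xy; by rewrite -xy xR in yR.
by apply/eqP/esym/count_memPn; rewrite -memR.
Qed.
End Spec.
Section CLemmas.
Variable C : numClosedFieldType.

Lemma tcM m n p (X : 'M[C]_(m,n)) (Y : 'M[C]_(n,p)) : (X *m Y)^t* = Y^t* *m X^t*.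
Proof. by rewrite trmx_mul map_mxM. Qed.

Lemma tcK m n (X : 'M[C]_(m,n)) : (X^t*)^t* = X.
Proof. exact: trmxCK. Qed.

Lemma tcB n (X Y : 'M[C]_n) : (X - Y)^t* = X^t* - Y^t*.
Proof. by apply/matrixP => i j; rewrite !mxE rmorphB. Qed.

Lemma tc1 n : (1%:M : 'M[C]_n)^t* = 1%:M.
Proof. by rewrite trmx1 map_mx1. Qed.

Lemma diag_ge0 m n (X : 'M[C]_(m,n)) i : 0 <= (X *m X^t*) i i.
Proof. by rewrite mxE; apply: sumr_ge0 => j _; rewrite !mxE; exact: mul_conjC_ge0. Qed.

Lemma tr_ge0 m n (X : 'M[C]_(m,n)) : 0 <= \tr (X *m X^t*).
Proof. by apply: sumr_ge0 => i _; exact: diag_ge0. Qed.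

Definition hproj n (H : 'M[C]_n) := H^t* = H /\ H *m H = H.

Lemma hproj_sq m n (X : 'M[C]_(m,n)) H : hproj H ->
  X *m H *m X^t* = (X *m H) *m (X *m H)^t*.
Proof. by case=> Ht HH; rewrite tcM Ht mulmxA -(mulmxA X H H) HH. Qed.

Lemma hproj_compl n (H : 'M[C]_n) : hproj H -> hproj (1%:M - H).
Proof.
case=> Ht HH; split; first by rewrite tcB tc1 Ht.
by rewrite mulmxBl !mulmxBr !mul1mx mulmx1 HH subrr subr0.
Qed.

Lemma hproj_diag_ge0 m n (X : 'M[C]_(m,n)) H i : hproj H ->
  0 <= (X *m H *m X^t*) i i.
Proof. by move=> hH; rewrite hproj_sq //; exact: diag_ge0. Qed.

Lemma hproj_diag_le m n (X : 'M[C]_(m,n)) H i : hproj H ->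
  (X *m H *m X^t*) i i <= (X *m X^t*) i i.
Proof.
move=> hH; rewrite -subr_ge0.
have -> : (X *m X^t*) i i - (X *m H *m X^t*) i i = (X *m (1%:M - H) *m X^t*) i i.
  by rewrite mulmxBr mulmx1 mulmxBl !mxE.
exact: hproj_diag_ge0 (hproj_compl hH).
Qed.

Lemma hproj_tr_le m n (X : 'M[C]_(m,n)) H : hproj H ->
  \tr (X *m H *m X^t*) <= \tr (X *m X^t*).
Proof. by move=> hH; apply: ler_sum => i _; exact: hproj_diag_le. Qed.

Lemma hproj_entry_ge0 n (H : 'M[C]_n) i : hproj H -> 0 <= H i i.
Proof.
case=> Ht HH; have -> : H = H *m H^t* by rewrite Ht HH.
exact: diag_ge0.
Qed.

Lemma hproj_tr2 n (H K : 'M[C]_n) : hproj H -> hproj K -> \tr (H *m K) <= \tr H.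
Proof.
move=> hH hK; rewrite -subr_ge0.
have -> : \tr H - \tr (H *m K) = \tr (H *m (1%:M - K) *m H^t*).
  case: hH => Ht HH; rewrite Ht.
  rewrite [in RHS]mxtrace_mulC mulmxA HH mulmxBr mulmx1.
  by rewrite linearB.
rewrite (hproj_sq _ (hproj_compl hK)); exact: tr_ge0.
Qed.
End CLemmas.
Section Q.
Variable R : realType.
Local Notation C := R[i].
Local Notation fC := (real_complex R).

Lemma map_real_tc m n (B : 'M[R]_(m,n)) : (map_mx fC B)^t* = map_mx fC B^T.
Proof. by apply/matrixP => i j; rewrite !mxE /= conj_real. Qed.

Lemma map_diag_real n (d : 'I_n -> R) :
  map_mx fC (diag_mx (\row_i d i)) = diag_mx (\row_i (d i)%:C%C).
Proof. by rewrite map_diag_mx; congr diag_mx; apply/rowP => i; rewrite !mxE. Qed.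

Lemma trace_boundQ n m k (B : 'M[R]_(n,m)) (H : 'M[C]_m) :
  hproj H -> \tr H = k%:R -> (0 < k <= n)%N ->
  \tr (map_mx fC B *m H *m (map_mx fC B)^t*) <= (Sk (B *m B^T) k)%:C%C.
Proof.
move=> hH trH kn.
have sym : (B *m B^T)^T = B *m B^T by rewrite trmx_mul trmxK.
have [P [q [PP PP' ME eig]]] := spectral_real sym.
set Bc := map_mx fC B.
set Y := P *m Bc.
have YY : Y *m Y^t* = diag_mx (\row_i (q i)%:C%C).
  have -> : Y *m Y^t* = P *m map_mx fC (B *m B^T) *m P^t*.
    by rewrite /Y tcM map_real_tc map_mxM !mulmxA.
  by rewrite ME !mulmxA PP mul1mx -mulmxA PP mulmx1.
pose c i := (Y *m H *m Y^t*) i i.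
have trE : \tr (Bc *m H *m Bc^t*) = \sum_i c i.
  rewrite /c -/(mxtrace (Y *m H *m Y^t*)).
  have -> : Y *m H *m Y^t* = P *m (Bc *m H *m Bc^t*) *m P^t* by rewrite /Y tcM !mulmxA.
  by rewrite [in RHS]mxtrace_mulC (mulmxA (P^t*)) PP' mul1mx.
have qE i : (Y *m Y^t*) i i = (q i)%:C%C by rewrite YY !mxE eqxx mulr1n.
have q0 i : 0 <= q i by rewrite -ler0c -qE diag_ge0.
have c0 i : 0 <= c i by exact: hproj_diag_ge0.
have cq i : c i <= (q i)%:C%C by rewrite -qE; exact: hproj_diag_le.
pose w i := c i / (q i)%:C%C.
have w0 i : 0 <= w i by rewrite divr_ge0 // ler0c.
have w1 i : w i <= 1.
  rewrite /w; case: (eqVneq (q i) 0) => [->|qn]; first by rewrite rmorph0 invr0 mulr0 ler01.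
  have qp : 0 < (q i)%:C%C by rewrite lt0r fmorph_eq0 qn ler0c q0.
  by rewrite ler_pdivrMr // mul1r cq.
have cw i : c i = (q i)%:C%C * w i.
  case: (eqVneq (q i) 0) => [q0'|qn].
    have h : c i <= 0 by rewrite -(rmorph0 fC) -q0' cq.
    by rewrite /w q0' rmorph0 mul0r; apply: le_anti; rewrite h c0.
  by rewrite /w mulrC divfK // fmorph_eq0.
have sumw : \sum_i w i <= k%:R.
  set G := map_mx fC (diag_mx (\row_i (q i)^-1)).
  have G_tc : G^t* = G by rewrite map_real_tc tr_diag_mx.
  pose K := Y^t* *m G *m Y.
  have hK : hproj K.
    split; first by rewrite /K /Y !tcM !tcK G_tc !mulmxA.
    have GDG : G *m diag_mx (\row_i (q i)%:C%C) *m G = G.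
      rewrite /G -map_diag_real -!map_mxM !mulmx_diag; congr map_mx; congr diag_mx.
      apply/rowP => i; rewrite !mxE.
      case: (eqVneq (q i) 0) => [->|qn]; first by rewrite invr0 !mul0r.
      by rewrite mulVf // mul1r.
    have -> : K *m K = Y^t* *m (G *m (Y *m Y^t*) *m G) *m Y by rewrite /K !mulmxA.
    by rewrite YY GDG /K.
  have -> : \sum_i w i = \tr (H *m K).
    rewrite /K mulmxA mxtrace_mulC !mulmxA.
    rewrite /G map_diag_real mul_mx_diag /mxtrace; apply: eq_bigr => i _.
    by rewrite /w /c [RHS]mxE -(fmorphV fC) !mxE.
  rewrite -trH; exact: hproj_tr2.
pose wr i := complex.Re (w i).
have wE i : w i = (wr i)%:C%C by rewrite RRe_real // ger0_real.
have wr01 i : 0 <= wr i <= 1.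
  apply/andP; split; first by rewrite -ler0c -wE.
  by have := w1 i; rewrite wE -lecR.
have swr : \sum_i wr i <= k%:R.
  have e : \sum_i w i = (\sum_i wr i)%:C%C.
    by rewrite rmorph_sum; apply: eq_bigr => i _; exact: wE.
  by have := sumw; rewrite e -(rmorph_nat fC) lecR.
have maj := major kn q0 wr01 swr.
have e : \sum_i c i = (\sum_i q i * wr i)%:C%C.
  by rewrite rmorph_sum; apply: eq_bigr => i _; rewrite cw wE rmorphM.
by rewrite trE e lecR /Sk eig.
Qed.

Lemma trace_boundQ2 n m (B : 'M[R]_(n,m)) (H : 'M[C]_m) :
  hproj H ->
  \tr (map_mx fC B *m H *m (map_mx fC B)^t*) <= (\tr (B *m B^T))%:C%C.
Proof.
move=> hH; apply: le_trans (hproj_tr_le _ hH) _.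
by rewrite map_real_tc -map_mxM /mxtrace rmorph_sum; under eq_bigr do rewrite mxE.
Qed.
End Q.
Section Graph.
Variables (V : finType) (e : rel V).
Hypothesis sg : simple_graph e.
Local Notation ET := (edge_type e).

Lemma e_sym u v : e u v = e v u.
Proof. by case: sg => s _; rewrite s. Qed.

Lemma e_irr u : e u u = false.
Proof. by case: sg => _ i; rewrite i. Qed.

Lemma e_neq u v : e u v -> u != v.
Proof. by apply: contraTneq => ->; rewrite e_irr. Qed.

Lemma is_edge2 u v : e u v -> is_edge e [set u; v].
Proof. by move=> euv; apply/existsP; exists u; apply/existsP; exists v; rewrite euv eqxx. Qed.

Lemma edge_other (E : ET) v : v \in val E -> exists2 u, e v u & val E = [set v; u].
Proof.
have /existsP[a /existsP[b /andP[eab /eqP Eab]]] := valP E.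
rewrite Eab => /set2P[->|->]; first by exists b.
by exists a; rewrite 1?e_sym // setUC.
Qed.

Lemma card_edge (E : ET) : #|val E| = 2%N.
Proof.
have /existsP[a /existsP[b /andP[eab /eqP ->]]] := valP E.
by rewrite cards2 e_neq.
Qed.

Lemma set2_inj (v u u' : V) : u != v -> u' != v -> [set v; u] = [set v; u'] -> u = u'.
Proof.
move=> uv u'v E; have : u \in [set v; u'] by rewrite -E set22.
by case/set2P => // /eqP; rewrite (negbTE uv).
Qed.

Lemma card_inc v : #|[set E : ET | v \in val E]| = deg e v.
Proof.
rewrite -(card_imset _ val_inj) /deg.
have -> : [set val E | E in [set E : ET | v \in val E]] =
          [set [set v; u] | u in [set u | e v u]].
  apply/setP => S; apply/imsetP/imsetP.
    case=> E; rewrite inE => /edge_other [u evu EE] ->.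
    by exists u; rewrite ?inE.
  case=> u; rewrite inE => evu ->.
  by exists (Sub [set v; u] (is_edge2 evu)); rewrite //= inE set21.
rewrite card_in_imset // => u u'; rewrite !inE => evu evu'.
apply: set2_inj; rewrite eq_sym e_neq //.
Qed.

Lemma card_inc2 u v : u != v ->
  #|[set E : ET | (u \in val E) && (v \in val E)]| = e u v.
Proof.
move=> uv; case: (boolP (e u v)) => euv.
  have -> : [set E : ET | (u \in val E) && (v \in val E)] = [set Sub [set u; v] (is_edge2 euv)].
    apply/setP => E; rewrite !inE; apply/andP/eqP.
      case=> /edge_other [w euw EE]; rewrite EE => /set2P [vu|vw].
        by rewrite vu eqxx in uv.
      by apply: val_inj; rewrite SubK EE vw.
    by move=> ->; rewrite SubK set21 set22.
  by rewrite cards1.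
apply/eqP; rewrite cards_eq0; apply/eqP/setP => E; rewrite !inE.
apply/negP => /andP[/edge_other [w euw ->]] /set2P [vu|vw].
  by rewrite vu eqxx in uv.
by rewrite vw euw in euv.
Qed.

Lemma card_meet (E F : ET) : E != F -> #|val E :&: val F| = line_rel e E F.
Proof.
move=> EF; rewrite /line_rel EF /=.
case: eqP => [->|/eqP ne]; first by rewrite cards0.
apply/eqP; rewrite eqn_leq card_gt0 ne andbT leqNgt; apply/negP => h.
have h1 : val E :&: val F == val E.
  by rewrite eqEcard subsetIl card_edge.
have h2 : val E :&: val F == val F.
  by rewrite eqEcard subsetIr card_edge.
move/eqP: h1 => h1; move/eqP: h2 => h2.
by move: EF; rewrite -(inj_eq val_inj) -{1}h1 h2 eqxx.
Qed.

Lemma deg_line (E : ET) : (deg (line_rel e) E + 2 = \sum_(v in val E) deg e v)%N.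
Proof.
have H1 : (\sum_(v in val E) deg e v = \sum_(F : ET) #|val E :&: val F|)%N.
  under eq_bigr do rewrite -card_inc.
  rewrite (eq_bigr (fun v => \sum_(F : ET | v \in val F) 1)%N); last first.
    by move=> v _; rewrite -sum1_card; apply: eq_bigl => F; rewrite inE.
  rewrite (exchange_big_dep xpredT) //=; apply: eq_bigr => F _.
  by rewrite -sum1_card; apply: eq_bigl => v; rewrite inE.
rewrite H1 (bigD1 E) //= setIid card_edge addnC; congr (_ + _)%N.
rewrite /deg -sum1_card big_mkcond [RHS]big_mkcond; apply: eq_bigr => F _.
rewrite inE; case: (eqVneq F E) => [->|FE]; first by rewrite /line_rel eqxx.
have EF : E != F by rewrite eq_sym.
by rewrite (card_meet EF); case: line_rel.
Qed.
End Graph.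
Section GraphMx.
Variables (R : realType) (V : finType) (e : rel V).
Hypothesis sg : simple_graph e.
Local Notation ET := (edge_type e).

Lemma sum_enum_val (T : finType) (G : T -> R) :
  \sum_(k < #|T|) G (enum_val k) = \sum_x G x.
Proof. by rewrite -big_enum_val. Qed.

Lemma sum_ind (T : finType) (P : pred T) :
  \sum_x ((P x : nat)%:R : R) = (#|[set x | P x]|)%:R.
Proof.
rewrite -sum1_card natr_sum big_mkcond [RHS]big_mkcond; apply: eq_bigr => x _.
by rewrite inE; case: (P x).
Qed.

Definition incmx : 'M[R]_(#|V|, #|ET|) :=
  \matrix_(i < #|V|, j < #|ET|) ((enum_val i \in val (enum_val j)) : nat)%:R.

Lemma Qmx_inc : Qmx R e = incmx *m incmx^T.
Proof.
apply/matrixP => i j; rewrite !mxE.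
under eq_bigr do rewrite !mxE.
rewrite (sum_enum_val (fun E : ET =>
   ((enum_val i \in val E) : nat)%:R * ((enum_val j \in val E) : nat)%:R)).
rewrite (eq_bigr (fun E : ET =>
   (((enum_val i \in val E) && (enum_val j \in val E)) : nat)%:R)); last first.
  by move=> E _; case: (_ \in _); case: (_ \in _); rewrite ?mulr1 ?mulr0 ?mul1r ?mul0r.
rewrite sum_ind; case: (eqVneq i j) => [->|ij].
  rewrite /= mulr1n mul1r e_irr // addr0.
  under eq_finset do rewrite andbb.
  by rewrite card_inc.
rewrite /= mulr0n mul0r add0r card_inc2 //.
by apply: contra ij => /eqP /enum_val_inj ->.
Qed.

Lemma adj_line : adjmx R (line_rel e) = incmx^T *m incmx - 2%:M.
Proof.
apply/matrixP => a b; rewrite !mxE.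
under eq_bigr do rewrite !mxE.
rewrite (sum_enum_val (fun v : V =>
   ((v \in val (enum_val a)) : nat)%:R * ((v \in val (enum_val b)) : nat)%:R)).
rewrite (eq_bigr (fun v : V =>
   (((v \in val (enum_val a)) && (v \in val (enum_val b))) : nat)%:R)); last first.
  by move=> v _; case: (_ \in _); case: (_ \in _); rewrite ?mulr1 ?mulr0 ?mul1r ?mul0r.
rewrite sum_ind.
have -> : [set v | (v \in val (enum_val a)) && (v \in val (enum_val b))] =
          val (enum_val a) :&: val (enum_val b) by apply/setP => v; rewrite !inE.
case: (eqVneq a b) => [->|ab].
  by rewrite setIid card_edge // /line_rel eqxx /= subrr.
rewrite card_meet //=; first by rewrite subr0.
by apply: contra ab => /eqP /enum_val_inj ->.
Qed.

Lemma degmx_diag (T : finType) (r : rel T) :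
  degmx R r = diag_mx (\row_i (deg r (enum_val i))%:R).
Proof.
apply/matrixP => i j; rewrite !mxE; case: eqP => [->|_].
  by rewrite mul1r mulr1n.
by rewrite mul0r mulr0n.
Qed.

Lemma deg_line_bound (E : ET) :
  ((deg (line_rel e) E)%:R : R) <= 2 * (maxdeg e)%:R - 2.
Proof.
have h : (deg (line_rel e) E + 2 <= 2 * maxdeg e)%N.
  rewrite deg_line //.
  have : (\sum_(v in val E) deg e v <= \sum_(v in val E) maxdeg e)%N.
    by apply: leq_sum => v _; exact: leq_bigmax.
  by rewrite sum_nat_const card_edge.
rewrite -(ler_nat R) natrD natrM in h.
lra.
Qed.

Lemma tr_inc : \tr (incmx *m incmx^T) = 2 * (#|ET|)%:R.
Proof.
rewrite mxtrace_mulC.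
have -> : incmx^T *m incmx = adjmx R (line_rel e) + 2%:M by rewrite adj_line subrK.
rewrite mxtraceD mxtrace_scalar /mxtrace big1 ?add0r; first by rewrite mulr_natr.
by move=> a _; rewrite mxE /line_rel eqxx /=.
Qed.

Lemma Aalpha_line (alpha : R) : Aalpha alpha (line_rel e) =
  alpha *: degmx R (line_rel e) + (1 - alpha) *: (incmx^T *m incmx - 2%:M).
Proof. by rewrite /Aalpha adj_line. Qed.

Lemma Aalpha_sym (alpha : R) : (Aalpha alpha (line_rel e))^T = Aalpha alpha (line_rel e).
Proof.
rewrite Aalpha_line degmx_diag linearD !linearZ /= tr_diag_mx linearB /=.
by rewrite trmx_mul trmxK tr_scalar_mx.
Qed.

Lemma Qmx_sym : (Qmx R e)^T = Qmx R e.
Proof. by rewrite Qmx_inc trmx_mul trmxK. Qed.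
End GraphMx.
Lemma sum_perm_ind (T : nzRingType) m k (s : 'S_m) (F : 'I_m -> T) :
  \sum_(j < m | (j < k)%N) F (s j) = \sum_i F i * (((s^-1)%g i < k)%N : nat)%:R.
Proof.
rewrite [RHS](eq_bigr (fun i => if ((s^-1)%g i < k)%N then F i else 0)); last first.
  by move=> i _; case: ifP => _; rewrite ?mulr1 ?mulr0.
rewrite -big_mkcond [RHS](reindex_inj (@perm_inj _ s)) /=.
by apply: eq_bigl => j; rewrite permK.
Qed.

Lemma tr_diag_mul (C : numDomainType) n (d : 'I_n -> C) (H : 'M[C]_n) (c : C) :
  (forall i, d i <= c) -> (forall i, 0 <= H i i) ->
  \tr (diag_mx (\row_i d i) *m H) <= c * \tr H.
Proof.
move=> dc H0; rewrite mul_diag_mx /mxtrace mulr_sumr; apply: ler_sum => i _.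
by rewrite !mxE ler_wpM2r.
Qed.

Section Main.
Variables (R : realType) (V : finType) (e : rel V).
Hypothesis sg : simple_graph e.
Local Notation ET := (edge_type e).
Local Notation C := R[i].
Local Notation fC := (real_complex R).

Lemma A_side (alpha : R) (k : nat) :
  0 <= alpha <= 1 -> (k <= #|ET|)%N ->
  exists H : 'M[C]_#|ET|, [/\ hproj H, \tr H = k%:R &
    (Sk (Aalpha alpha (line_rel e)) k)%:C%C <=
    (alpha * ((2 * (maxdeg e)%:R - 2) * k%:R))%:C%C + (1 - alpha)%:C%C *
      (\tr (map_mx fC (incmx R e) *m H *m (map_mx fC (incmx R e))^t*) - 2 * k%:R)].
Proof.
move=> /andP[a0 a1] km.
set A := Aalpha alpha (line_rel e).
have [P [r [PP PP' AE eig]]] := spectral_real (Aalpha_sym sg alpha).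
set t := [tuple r i | i < #|ET|].
have pe : perm_eq (eigvals A) t.
  by rewrite eig perm_sort.
have [s sE] := tuple_permP pe.
have nthE (j : 'I_#|ET|) : nth 0 (eigvals A) j = r (s j).
  by rewrite sE nth_mktuple tnth_mktuple.
pose ind i := (((s^-1)%g i < k)%N : nat).
have SkE : Sk A k = \sum_i r i * (ind i)%:R.
  rewrite /Sk (big_ord_widen #|ET| (fun j => nth 0 (eigvals A) j) km).
  rewrite -sum_perm_ind; apply: eq_bigr => j _; exact: nthE.
have sind : \sum_i ((ind i)%:R : R) = k%:R.
  transitivity (\sum_i (1:R) * (ind i)%:R); first by apply: eq_bigr => i _; rewrite mul1r.
  rewrite -(sum_perm_ind k s (fun _ => 1)) -(big_ord_widen #|ET| (fun _ => (1 : R)) km).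
  by rewrite sumr_const card_ord.
pose E := map_mx fC (diag_mx (\row_i ((ind i)%:R : R))).
have Etc : E^t* = E by rewrite map_real_tc tr_diag_mx.
have EE : E *m E = E.
  rewrite -map_mxM mulmx_diag; congr map_mx; congr diag_mx.
  by apply/rowP => i; rewrite !mxE /ind; case: (_ < k)%N; rewrite ?mulr0 ?mulr1.
pose H := P^t* *m E *m P.
have hH : hproj H.
  split; first by rewrite /H !tcM tcK Etc mulmxA.
  by rewrite /H !mulmxA -(mulmxA _ P) PP mulmx1 -(mulmxA (P^t*) E E) EE.
have trH : \tr H = k%:R.
  rewrite /H mxtrace_mulC mulmxA PP mul1mx /E trace_map_mx mxtrace_diag.
  under eq_bigr do rewrite mxE.
  by rewrite sind rmorph_nat.
exists H; split => //.
have trAH : \tr (map_mx fC A *m H) = (Sk A k)%:C%C.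
  rewrite AE /H.
  have -> : P^t* *m diag_mx (\row_i (r i)%:C%C) *m P *m (P^t* *m E *m P)
      = P^t* *m (diag_mx (\row_i (r i)%:C%C) *m E) *m P.
    by rewrite !mulmxA -(mulmxA _ P) PP mulmx1.
  rewrite mxtrace_mulC mulmxA PP mul1mx /E map_diag_real mulmx_diag mxtrace_diag.
  rewrite SkE rmorph_sum; apply: eq_bigr => i _; rewrite !mxE rmorphM //.
set Bc := map_mx fC (incmx R e).
set DL := map_mx fC (degmx R (line_rel e)).
have AcE : map_mx fC A = alpha%:C%C *: DL + (1 - alpha)%:C%C *: (Bc^t* *m Bc - 2%:M).
  rewrite /A Aalpha_line // (map_mxD fC) !(map_mxZ fC) (map_mxB fC) (map_mxM fC).
  by rewrite (map_scalar_mx fC) (rmorph_nat fC) /Bc map_real_tc.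
have trDL : \tr (DL *m H) <= ((2 * (maxdeg e)%:R - 2) * k%:R)%:C%C.
  rewrite /DL degmx_diag map_diag_real rmorphM (rmorph_nat fC) -trH.
  apply: tr_diag_mul => [i|i]; last exact: hproj_entry_ge0.
  by rewrite lecR; exact: deg_line_bound.
have trB : \tr ((Bc^t* *m Bc - 2%:M) *m H) = \tr (Bc *m H *m Bc^t*) - 2 * k%:R.
  rewrite mulmxBl mul_scalar_mx linearB /= linearZ /= trH.
  by rewrite -(mulmxA (Bc^t*) Bc H) (mxtrace_mulC (Bc^t*)).
rewrite -trAH AcE mulmxDl -!scalemxAl mxtraceD !mxtraceZ trB.
rewrite lerD2r rmorphM ler_wpM2l // ler0c //.
Qed.
End Main.
Lemma chain (R : realType) (x a c t' : R) (k : nat) (T : R[i]) :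
  0 <= a <= 1 -> (x%:C <= (a * c)%:C + (1 - a)%:C * (T - 2 * k%:R))%C ->
  (T <= t'%:C)%C ->
  x <= a * c + (1 - a) * (t' - 2 * k%:R).
Proof.
move=> /andP[a0 a1] h Tt; rewrite -lecR; apply: le_trans h _.
have E : ((a * c + (1 - a) * (t' - 2 * k%:R))%:C =
          (a * c)%:C + (1 - a)%:C * (t'%:C - 2 * k%:R))%C.
  rewrite !(rmorphD, rmorphM, rmorphN, rmorph1, rmorph_nat); ring.
rewrite E lerD2l ler_wpM2l ?ler0c ?subr_ge0 // lerD2r //.
Qed.

Local Close Scope sesquilinear_scope.
Unset Implicit Arguments.

Theorem theorem6p2 (R : realType) (V : finType) (e : rel V)
  (alpha : R) (k : nat) :
  simple_graph e ->
  (1 <= #|edge_type e|)%N ->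
  0 <= alpha <= 1 ->
  ((1 <= k <= minn #|V| #|edge_type e|)%N ->
     Sk (Aalpha alpha (line_rel e)) k <=
       2 * k%:R * (alpha * (maxdeg e)%:R - 1) + (1 - alpha) * Sk (Qmx R e) k)
  /\
  ((#|V| < #|edge_type e|)%N -> (#|V|.+1 <= k <= #|edge_type e|)%N ->
     Sk (Aalpha alpha (line_rel e)) k <=
       2 * alpha * k%:R * ((maxdeg e)%:R - 1)
       + 2 * (1 - alpha) * (#|edge_type e|%:R - k%:R)).
Proof.
move=> sg m1 a01; split.
  move=> /andP[k1 kmin].
  have kn : (k <= #|V|)%N := leq_trans kmin (geq_minl _ _).
  have km : (k <= #|edge_type e|)%N := leq_trans kmin (geq_minr _ _).
  have [H [hH trH ineq]] := A_side sg a01 km.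
  have Tb := trace_boundQ (incmx R e) hH trH (introT andP (conj k1 kn)).
  rewrite (Qmx_inc R sg).
  apply: le_trans (chain a01 ineq Tb) _.
  rewrite le_eqVlt; apply/orP; left; apply/eqP; ring.
move=> nm /andP[nk km].
have [H [hH trH ineq]] := A_side sg a01 km.
have Tb := trace_boundQ2 (incmx R e) hH.
rewrite (tr_inc R sg) in Tb.
apply: le_trans (chain a01 ineq Tb) _.
rewrite le_eqVlt; apply/orP; left; apply/eqP; ring.
Qed.
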